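(* For a multiplicative Lie algebra $G$: (1) $(Z(G)\otimes G)(G\otimes Z(G))\subseteq Z(G\otimes G)$; (2) $(LZ(G)\otimes G)(G\otimes LZ(G))\subseteq LZ(G\otimes G)$; (3) $(\mathcal Z(G)\otimes G)(G\otimes\mathcal Z(G))\subseteq\mathcal Z(G\otimes G)$.
   Context: A multiplicative Lie algebra is a group $(G,\cdot)$ with a binary operation $\star$ such that for all $x,y,z\in G$: $x\star x=1$; $x\star(yz)=(x\star y)\,{}^y(x\star z)$; $(xy)\star z={}^x(y\star z)(x\star z)$; $((x\star y)\star{}^yz)((y\star z)\star{}^zx)((z\star x)\star{}^xy)=1$; ${}^z(x\star y)={}^zx\star{}^zy$, where ${}^xy=xyx^{-1}$. $Z(G)$ is the group center, $LZ(G)=\{x: x\star y=1\ \forall y\}$, $\mathcal Z(G)=LZ(G)\cap Z(G)$. The tensor square $G\otimes G$ is the multiplicative Lie algebra generated by symbols $x\otimes y$ ($x,y\in G$) subject to, for all $x,x',y,y'\in G$: $x\otimes(yy')=(x\otimes y)({}^yx\otimes{}^yy')$; $(xx')\otimes y=({}^xx'\otimes{}^xy)(x\otimes y)$; $((x\star x')\otimes{}^{x'}y)({}^yx\otimes(x'\star y))^{-1}({}^xx'\otimes(x\star y)^{-1})^{-1}=1$; $({}^{y'}x\otimes(y\star y'))((y\star x)^{-1}\otimes{}^yy')^{-1}((y'\star x)\otimes{}^xy)^{-1}=1$; and $(x\otimes y)\star(x'\otimes y')=(y\star x)^{-1}\otimes(x'\star y')$. For an ideal $A$ of $G$, $A\otimes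 G$ (resp. $G\otimes A$) is the subgroup of $G\otimes G$ generated by all $a\otimes b$ with $a\in A,b\in G$ (resp. $a\in G,b\in A$). *)

(* Defs.v *)
Set Implicit Arguments.

(* Conjugation  ^x y = x y x^{-1}  is written out as mul (mul x y) (inv x). *)
Record MLie := {
  car :> Type;
  mul : car -> car -> car;
  one : car;
  inv : car -> car;
  star : car -> car -> car;
  mulA : forall x y z, mul x (mul y z) = mul (mul x y) z;
  mul1g : forall x, mul one x = x;
  mulVg : forall x, mul (inv x) x = one;
  star_xx : forall x, star x x = one;
  star_mulr : forall x y z,
    star x (mul y z) = mul (star x y) (mul (mul y (star x z)) (inv y));
  star_mull : forall x y z,
    star (mul x y) z = mul (mul (mul x (star y z)) (inv x)) (star x z);
  star_jacobi : forall x y z,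
    mul (mul (star (star x y) (mul (mul y z) (inv y)))
             (star (star y z) (mul (mul z x) (inv z))))
        (star (star z x) (mul (mul x y) (inv x))) = one;
  star_conj : forall x y z,
    mul (mul z (star x y)) (inv z)
    = star (mul (mul z x) (inv z)) (mul (mul z y) (inv z))
}.

Arguments mul {m}.
Arguments one {m}.
Arguments inv {m}.
Arguments star {m}.

Definition cj {G : MLie} (x y : G) : G := mul (mul x y) (inv x).

Definition Zc (G : MLie) (x : G) : Prop := forall y : G, mul x y = mul y x.
Definition LZ (G : MLie) (x : G) : Prop := forall y : G, star x y = one.
Definition calZ (G : MLie) (x : G) : Prop := LZ G x /\ Zc G x.

Definition is_hom (G H : MLie) (f : G -> H) : Prop :=
  (forall x y : G, f (mul x y) = mul (f x) (f y)) /\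
  (forall x y : G, f (star x y) = star (f x) (f y)).

Definition tensor_rels (G T : MLie) (t : G -> G -> T) : Prop :=
  (forall x y y' : G, t x (mul y y') = mul (t x y) (t (cj y x) (cj y y'))) /\
  (forall x x' y : G, t (mul x x') y = mul (t (cj x x') (cj x y)) (t x y)) /\
  (forall x x' y : G,
     mul (mul (t (star x x') (cj x' y)) (inv (t (cj y x) (star x' y))))
         (inv (t (cj x x') (inv (star x y)))) = one) /\
  (forall x y y' : G,
     mul (mul (t (cj y' x) (star y y')) (inv (t (inv (star y x)) (cj y y'))))
         (inv (t (star y' x) (cj x y))) = one) /\
  (forall x x' y y' : G,
     star (t x y) (t x' y') = t (inv (star y x)) (star x' y')).

(* (T, t) is THE tensor square G ⊗ G: the multiplicative Lie algebra presented
   by generators x ⊗ y and the relations above, characterized by its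
   universal property (initial among multiplicative Lie algebras with a map
   satisfying the relations). *)
Definition is_tensor_square (G T : MLie) (t : G -> G -> T) : Prop :=
  tensor_rels G T t /\
  forall (M : MLie) (s : G -> G -> M), tensor_rels G M s ->
    exists f : T -> M, is_hom T M f /\ (forall x y, f (t x y) = s x y) /\
      forall g : T -> M, is_hom T M g -> (forall x y, g (t x y) = s x y) ->
        forall z, g z = f z.

Inductive gen (T : MLie) (S : T -> Prop) : T -> Prop :=
  | gen_in : forall x, S x -> gen T S x
  | gen_one : gen T S one
  | gen_mul : forall x y, gen T S x -> gen T S y -> gen T S (mul x y)
  | gen_inv : forall x, gen T S x -> gen T S (inv x).

(* A ⊗ G and G ⊗ A as subgroups of T = G ⊗ G *)
Definition tensL (G T : MLie) (t : G -> G -> T) (A : G -> Prop) : T -> Prop :=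
  gen T (fun w => exists a b, A a /\ w = t a b).
Definition tensR (G T : MLie) (t : G -> G -> T) (A : G -> Prop) : T -> Prop :=
  gen T (fun w => exists a b, A b /\ w = t a b).

Definition setmul (T : MLie) (H K : T -> Prop) : T -> Prop :=
  fun w => exists h k, H h /\ K k /\ w = mul h k.

Definition subset {X : Type} (A B : X -> Prop) : Prop := forall x, A x -> B x.

(* Main.v *)
Require Import Defs.
From Stdlib Require Import ProofIrrelevance.

Lemma mulgV (M : MLie) (x : M) : mul x (inv x) = one.
Proof.
  assert (H: mul x (inv x) = mul (mul (inv (inv x)) (inv x)) (mul x (inv x)))
    by (rewrite mulVg, mul1g; reflexivity).
  rewrite H, <- mulA, (mulA _ (inv x) x), mulVg, mul1g, mulVg. reflexivity.
Qed.

Lemma mulg1 (M : MLie) (x : M) : mul x one = x.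
Proof. rewrite <- (mulVg M x), mulA, mulgV, mul1g. reflexivity. Qed.

Lemma mulgVK (M : MLie) (x a : M) : mul (mul x (inv a)) a = x.
Proof. rewrite <- mulA, mulVg, mulg1. reflexivity. Qed.

Lemma mulgKV (M : MLie) (x a : M) : mul (mul x a) (inv a) = x.
Proof. rewrite <- mulA, mulgV, mulg1. reflexivity. Qed.

Lemma mul_cancel_l (M : MLie) (a x y : M) : mul a x = mul a y -> x = y.
Proof.
  intro H. rewrite <- (mul1g M x), <- (mul1g M y), <- (mulVg M a), <- !mulA, H.
  reflexivity.
Qed.

Lemma mul_cancel_r (M : MLie) (a x y : M) : mul x a = mul y a -> x = y.
Proof.
  intro H. rewrite <- (mulg1 M x), <- (mulg1 M y), <- (mulgV M a), !mulA, H.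
  reflexivity.
Qed.

Lemma inv_one (M : MLie) : inv (@one M) = one.
Proof. rewrite <- (mulg1 M (inv one)), mulVg. reflexivity. Qed.

Lemma eq_one (M : MLie) (s : M) : s = mul s s -> s = one.
Proof. intro H. apply (mul_cancel_l M s). rewrite mulg1. symmetry. exact H. Qed.

Lemma inv_uniq (M : MLie) (a b : M) : mul a b = one -> b = inv a.
Proof. intro H. apply (mul_cancel_l M a). rewrite H, mulgV. reflexivity. Qed.

Lemma cj_eq_one (M : MLie) (v s : M) : mul (mul v s) (inv v) = one -> s = one.
Proof.
  intro H. apply (mul_cancel_l M v). apply (mul_cancel_r M (inv v)).
  rewrite mulg1, mulgV. exact H.
Qed.

Lemma cj_inv_cj (M : MLie) (y s : M) : cj (inv y) (cj y s) = s.
Proof.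
  unfold cj. rewrite !mulA. rewrite mulVg, mul1g, mulgKV.
  reflexivity.
Qed.

Lemma cj_mul (M : MLie) (k a b : M) : cj k (mul a b) = mul (cj k a) (cj k b).
Proof. unfold cj. rewrite !mulA, mulgVK. reflexivity. Qed.

Lemma star_1l (M : MLie) (x : M) : star one x = one.
Proof.
  pose proof (star_mull M one one x) as H.
  rewrite !mul1g, inv_one, mulg1 in H. apply eq_one. exact H.
Qed.

Lemma star_1r (M : MLie) (x : M) : star x one = one.
Proof.
  pose proof (star_mulr M x one one) as H.
  rewrite !mul1g, inv_one, mulg1 in H. apply eq_one. exact H.
Qed.

Lemma star_invr (M : MLie) (w v : M) : star w v = one -> star w (inv v) = one.
Proof.
  intro Hw. pose proof (star_mulr M w v (inv v)) as H.
  rewrite mulgV, star_1r, Hw, mul1g in H. apply (cj_eq_one M v). symmetry. exact H.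
Qed.

Lemma star_invl (M : MLie) (x z : M) : star x z = one -> star (inv x) z = one.
Proof.
  intro Hx. pose proof (star_mull M (inv x) x z) as H.
  rewrite mulVg, star_1l, Hx, mulg1, mulgV, mul1g in H. symmetry. exact H.
Qed.

Lemma star_inv_formula_r (M : MLie) (g y : M) :
  star g (inv y) = cj (inv y) (inv (star g y)).
Proof.
  pose proof (star_mulr M g y (inv y)) as H.
  rewrite mulgV, star_1r in H. symmetry in H. apply inv_uniq in H.
  change (cj y (star g (inv y)) = inv (star g y)) in H.
  rewrite <- H, cj_inv_cj. reflexivity.
Qed.

Lemma star_inv_formula_l (M : MLie) (x y : M) :
  star (inv x) y = inv (cj (inv x) (star x y)).
Proof.
  pose proof (star_mull M (inv x) x y) as H.
  rewrite mulVg, star_1l in H. symmetry in H. apply inv_uniq in H. exact H.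
Qed.

Lemma gen_cj (M : MLie) (S : M -> Prop) x y : gen M S x -> gen M S y -> gen M S (cj x y).
Proof. intros. unfold cj. apply gen_mul; [apply gen_mul|apply gen_inv]; assumption. Qed.

Lemma gen_mono (M : MLie) (S S' : M -> Prop) :
  (forall x, S x -> S' x) -> forall x, gen M S x -> gen M S' x.
Proof. intros HS x Hx. induction Hx; [apply gen_in; auto|apply gen_one|apply gen_mul; auto|apply gen_inv; auto]. Qed.

Definition GS {G T : MLie} (t : G -> G -> T) (w : T) : Prop := exists a b, w = t a b.

Lemma gen_star {G T : MLie} {t : G -> G -> T} (HT : tensor_rels G T t) :
  forall x y, gen T (GS t) x -> gen T (GS t) y -> gen T (GS t) (star x y).
Proof.
  destruct HT as [_ [_ [_ [_ R5]]]].
  assert (Hg : forall g y, GS t g -> gen T (GS t) y -> gen T (GS t) (star g y)).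
  { intros g y Hg Hy. induction Hy.
    - destruct Hg as [a [b ->]]. destruct H as [c [d ->]]. rewrite R5.
      apply gen_in. eexists; eexists; reflexivity.
    - rewrite star_1r. apply gen_one.
    - rewrite star_mulr. apply gen_mul; auto. apply gen_cj; auto.
    - rewrite star_inv_formula_r. apply gen_cj; apply gen_inv; auto. }
  intros x y Hx Hy. induction Hx.
  - auto.
  - rewrite star_1l. apply gen_one.
  - rewrite star_mull. apply gen_mul; auto. apply gen_cj; auto.
  - rewrite star_inv_formula_l. apply gen_inv. apply gen_cj; auto. apply gen_inv; auto.
Qed.


Definition SubT {G T : MLie} (t : G -> G -> T) := {v : T | gen T (GS t) v}.

Lemma sig_eq {G T : MLie} {t : G -> G -> T} (u v : SubT t) :
  proj1_sig u = proj1_sig v -> u = v.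
Proof. destruct u, v; simpl; intros ->. f_equal. apply proof_irrelevance. Qed.

Definition Sub {G T : MLie} {t : G -> G -> T} (HT : tensor_rels G T t) : MLie.
Proof.
  refine {| car := SubT t;
    mul := fun u v => exist _ (mul (proj1_sig u) (proj1_sig v))
                        (gen_mul (proj2_sig u) (proj2_sig v));
    one := exist _ one (gen_one _ _);
    inv := fun u => exist _ (inv (proj1_sig u)) (gen_inv (proj2_sig u));
    star := fun u v => exist _ (star (proj1_sig u) (proj1_sig v))
                        (gen_star HT _ _ (proj2_sig u) (proj2_sig v)) |};
  intros; apply sig_eq; simpl.
  - apply mulA.
  - apply mul1g.
  - apply mulVg.
  - apply star_xx.
  - apply star_mulr.
  - apply star_mull.
  - apply star_jacobi.
  - apply star_conj.
Defined.

Lemma gen_all (G T : MLie) (t : G -> G -> T) (HT : is_tensor_square G T t) :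
  forall v : T, gen T (GS t) v.
Proof.
  destruct HT as [HR HU].
  pose (s := fun x y => exist (gen T (GS t)) (t x y)
                 (gen_in _ _ _ (ex_intro _ x (ex_intro _ y eq_refl))) : Sub HR).
  assert (Hs : tensor_rels G (Sub HR) s).
  { destruct HR as [R1 [R2 [R3 [R4 R5]]]].
    repeat split; intros; apply sig_eq; cbn.
    - apply R1.
    - apply R2.
    - apply R3.
    - apply R4.
    - apply R5. }
  destruct (HU (Sub HR) s Hs) as [f [[fm fs] [ft _]]].
  destruct (HU T t HR) as [f0 [_ [_ Hu]]].
  pose (g := fun v => proj1_sig (f v)).
  assert (E1 : forall z, g z = f0 z).
  { apply Hu.
    - split; intros; unfold g; [rewrite fm | rewrite fs]; reflexivity.
    - intros; unfold g; rewrite ft; reflexivity. }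
  assert (E2 : forall z, (fun v => v) z = f0 z).
  { apply Hu.
    - split; reflexivity.
    - reflexivity. }
  intro v. specialize (E1 v). specialize (E2 v). simpl in E2.
  rewrite E2, <- E1. unfold g. apply proj2_sig.
Qed.

Lemma cj_cj_inv (M : MLie) (y s : M) : cj y (cj (inv y) s) = s.
Proof. unfold cj. rewrite !mulA, mulgV, mul1g, mulgVK. reflexivity. Qed.

Lemma cj_central (M : MLie) (z x : M) : Zc M z -> cj z x = x.
Proof. intro Hz. unfold cj. rewrite Hz, mulgKV. reflexivity. Qed.

Lemma cj_central' (M : MLie) (z x : M) : Zc M z -> cj x z = z.
Proof. intro Hz. unfold cj. rewrite <- Hz, mulgKV. reflexivity. Qed.

Lemma central_l (G T : MLie) (t : G -> G -> T) (HR : tensor_rels G T t) (z h : G) :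
  Zc G z -> forall a b, mul (t z h) (t a b) = mul (t a b) (t z h).
Proof.
  intro Hz. destruct HR as [R1 [R2 _]].
  assert (K : forall g' h', mul (t (cj h g') (cj h h')) (t z h) = mul (t z h) (t (cj h g') (cj h h'))).
  { intros g' h'.
    pose proof (R2 z g' (mul h h')) as EA.
    pose proof (R1 (mul z g') h h') as EB.
    rewrite EA in EB. clear EA.
    rewrite (cj_central G z g' Hz), (cj_central G z (mul h h') Hz) in EB.
    rewrite (R1 g' h h'), (R1 z h h') in EB.
    rewrite (cj_mul G h z g'), (cj_central' G z h Hz) in EB.
    rewrite (R2 z g' h), (R2 z (cj h g') (cj h h')) in EB.
    rewrite (cj_central G z g' Hz), (cj_central G z h Hz), (cj_central G z (cj h g') Hz),
      (cj_central G z (cj h h') Hz) in EB.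
    rewrite !mulA in EB.
    apply mul_cancel_r in EB.
    rewrite <- !mulA in EB.
    apply mul_cancel_l in EB.
    exact EB. }
  intros a b. pose proof (K (cj (inv h) a) (cj (inv h) b)) as K'.
  rewrite !cj_cj_inv in K'. symmetry; exact K'.
Qed.

Lemma central_r (G T : MLie) (t : G -> G -> T) (HR : tensor_rels G T t) (g z : G) :
  Zc G z -> forall a b, mul (t g z) (t a b) = mul (t a b) (t g z).
Proof.
  intro Hz. destruct HR as [R1 [R2 _]].
  assert (K : forall g' h', mul (t (cj g g') (cj g h')) (t g z) = mul (t g z) (t (cj g g') (cj g h'))).
  { intros g' h'.
    pose proof (R2 g g' (mul z h')) as EA.
    pose proof (R1 (mul g g') z h') as EB.
    rewrite EA in EB. clear EA.
    rewrite (cj_mul G g z h'), (cj_central' G z g Hz) in EB.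
    rewrite (R1 (cj g g') z (cj g h')), (R1 g z h') in EB.
    rewrite (cj_central G z (mul g g') Hz), (cj_central G z h' Hz) in EB.
    rewrite (R2 g g' z), (R2 g g' h'), (cj_central' G z g Hz) in EB.
    rewrite (cj_central G z g Hz), (cj_central G z (cj g g') Hz),
      (cj_central G z (cj g h') Hz) in EB.
    rewrite !mulA in EB.
    apply mul_cancel_r in EB.
    rewrite <- !mulA in EB.
    apply mul_cancel_l in EB.
    first [exact EB | symmetry; exact EB]. }
  intros a b. pose proof (K (cj (inv g) a) (cj (inv g) b)) as K'.
  rewrite !cj_cj_inv in K'. first [exact K' | symmetry; exact K'].
Qed.

Lemma comm_inv (M : MLie) (c y : M) : mul c y = mul y c -> mul c (inv y) = mul (inv y) c.
Proof.
  intro H. apply (mul_cancel_l M y).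
  rewrite (mulA M y c), <- H, mulgKV, mulA, mulgV, mul1g. reflexivity.
Qed.

Lemma Zc_one (M : MLie) : Zc M one.
Proof. intro y. rewrite mul1g, mulg1. reflexivity. Qed.

Lemma Zc_mul (M : MLie) (x y : M) : Zc M x -> Zc M y -> Zc M (mul x y).
Proof.
  intros Hx Hy w. rewrite <- mulA, Hy, mulA, Hx, mulA. reflexivity.
Qed.

Lemma Zc_inv (M : MLie) (x : M) : Zc M x -> Zc M (inv x).
Proof. intros Hx y. symmetry. apply comm_inv. symmetry. apply Hx. Qed.

Lemma LZ_one (M : MLie) : LZ M one.
Proof. intro y. apply star_1l. Qed.

Lemma LZ_mul (M : MLie) (x y : M) : LZ M x -> LZ M y -> LZ M (mul x y).
Proof.
  intros Hx Hy z. rewrite star_mull, Hx, Hy, !mulg1, mulgV. reflexivity.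
Qed.

Lemma LZ_inv (M : MLie) (x : M) : LZ M x -> LZ M (inv x).
Proof. intros Hx z. apply star_invl. apply Hx. Qed.

Lemma star_anti (M : MLie) (x y : M) : mul (star y x) (star x y) = one.
Proof.
  pose proof (star_xx M (mul x y)) as H.
  rewrite star_mull in H.
  rewrite (star_mulr M y x y), (star_mulr M x x y), !star_xx in H.
  rewrite !mulg1, mulgV, mulg1, mul1g in H.
  rewrite !mulA, mulgVK in H.
  apply (cj_eq_one M x). rewrite mulA. exact H.
Qed.

Lemma t_one_l (G T : MLie) (t : G -> G -> T) (HR : tensor_rels G T t) (y : G) : t one y = one.
Proof.
  destruct HR as [_ [R2 _]]. pose proof (R2 one one y) as H.
  unfold cj in H. rewrite !mul1g, inv_one, !mulg1 in H. apply eq_one. exact H.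
Qed.

Lemma comm_gen (G T : MLie) (t : G -> G -> T) (HT : is_tensor_square G T t) (c : T) :
  (forall a b, mul c (t a b) = mul (t a b) c) -> Zc T c.
Proof.
  intros Hc y. pose proof (gen_all G T t HT y) as Hy. induction Hy.
  - destruct H as [a [b ->]]. apply Hc.
  - rewrite mul1g, mulg1. reflexivity.
  - rewrite mulA, IHHy1, <- mulA, IHHy2, mulA. reflexivity.
  - apply comm_inv. exact IHHy.
Qed.

Lemma lz_gen (G T : MLie) (t : G -> G -> T) (HT : is_tensor_square G T t) (w : T) :
  (forall a b, star w (t a b) = one) -> LZ T w.
Proof.
  intros Hw v. pose proof (gen_all G T t HT v) as Hv. induction Hv.
  - destruct H as [a [b ->]]. apply Hw.
  - apply star_1r.
  - rewrite star_mulr, IHHv1, IHHv2, mul1g, mulg1, mulgV. reflexivity.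
  - apply star_invr. exact IHHv.
Qed.

Lemma tensL_Zc (G T : MLie) (t : G -> G -> T) (HT : is_tensor_square G T t) :
  subset (tensL G T t (Zc G)) (Zc T).
Proof.
  intros w Hw. induction Hw.
  - destruct H as [a [b [Ha ->]]]. apply (comm_gen G T t HT).
    apply central_l; [apply (proj1 HT) | exact Ha].
  - apply Zc_one.
  - apply Zc_mul; assumption.
  - apply Zc_inv; assumption.
Qed.

Lemma tensR_Zc (G T : MLie) (t : G -> G -> T) (HT : is_tensor_square G T t) :
  subset (tensR G T t (Zc G)) (Zc T).
Proof.
  intros w Hw. induction Hw.
  - destruct H as [a [b [Hb ->]]]. apply (comm_gen G T t HT).
    apply central_r; [apply (proj1 HT) | exact Hb].
  - apply Zc_one.
  - apply Zc_mul; assumption.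
  - apply Zc_inv; assumption.
Qed.

Lemma tensL_LZ (G T : MLie) (t : G -> G -> T) (HT : is_tensor_square G T t) :
  subset (tensL G T t (LZ G)) (LZ T).
Proof.
  intros w Hw. induction Hw.
  - destruct H as [a [b [Ha ->]]]. apply (lz_gen G T t HT).
    intros x y. destruct HT as [HR _]. pose proof HR as HR'.
    destruct HR' as [_ [_ [_ [_ R5]]]]. rewrite R5.
    pose proof (star_anti G a b) as E. rewrite (Ha b), mulg1 in E.
    rewrite E, inv_one. apply t_one_l. exact HR.
  - apply LZ_one.
  - apply LZ_mul; assumption.
  - apply LZ_inv; assumption.
Qed.

Lemma tensR_LZ (G T : MLie) (t : G -> G -> T) (HT : is_tensor_square G T t) :
  subset (tensR G T t (LZ G)) (LZ T).
Proof.
  intros w Hw. induction Hw.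
  - destruct H as [a [b [Hb ->]]]. apply (lz_gen G T t HT).
    intros x y. destruct HT as [HR _]. pose proof HR as HR'.
    destruct HR' as [_ [_ [_ [_ R5]]]]. rewrite R5.
    rewrite (Hb a), inv_one. apply t_one_l. exact HR.
  - apply LZ_one.
  - apply LZ_mul; assumption.
  - apply LZ_inv; assumption.
Qed.

Theorem lemma3p3 (G T : MLie) (t : G -> G -> T)
  (HT : is_tensor_square G T t) :
  subset (setmul T (tensL G T t (Zc G)) (tensR G T t (Zc G))) (Zc T) /\
  subset (setmul T (tensL G T t (LZ G)) (tensR G T t (LZ G))) (LZ T) /\
  subset (setmul T (tensL G T t (calZ G)) (tensR G T t (calZ G))) (calZ T).
Proof.
  split; [|split].
  - intros w [h [k [Hh [Hk ->]]]]. apply Zc_mul.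
    + apply (tensL_Zc G T t HT). exact Hh.
    + apply (tensR_Zc G T t HT). exact Hk.
  - intros w [h [k [Hh [Hk ->]]]]. apply LZ_mul.
    + apply (tensL_LZ G T t HT). exact Hh.
    + apply (tensR_LZ G T t HT). exact Hk.
  - intros w [h [k [Hh [Hk ->]]]]. split.
    + apply LZ_mul.
      * apply (tensL_LZ G T t HT). unfold tensL in *.
        revert Hh. apply gen_mono. intros x [a [b [[Ha _] E]]]. exists a, b. auto.
      * apply (tensR_LZ G T t HT). unfold tensR in *.
        revert Hk. apply gen_mono. intros x [a [b [[Hb _] E]]]. exists a, b. auto.
    + apply Zc_mul.
      * apply (tensL_Zc G T t HT). unfold tensL in *.
        revert Hh. apply gen_mono. intros x [a [b [[_ Ha] E]]]. exists a, b. auto.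
      * apply (tensR_Zc G T t HT). unfold tensR in *.
        revert Hk. apply gen_mono. intros x [a [b [[_ Hb] E]]]. exists a, b. auto.
Qed.
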